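(* There is a constant $C>0$ such that for all $n\ge 2$ and $D\ge 1$ there exist a deterministic distributed algorithm and, for every graph $G$ of size $n$ and diameter $D$, an advice assignment of size at most $C\,n\log n$, under which the algorithm accomplishes labeled topology recognition in $G$ within time $D$.
   Context: Graphs are finite, simple, undirected, connected, with no node labels; at each node of degree $d$ the incident edges carry distinct port numbers $0,\dots,d-1$ (no coherence between endpoints). Isomorphism is a bijection of nodes preserving edges and port numbers at both endpoints. Size = number of nodes; $\log$ is base 2. Communication model (LOCAL): synchronous rounds, all nodes start simultaneously; in each round every node may send arbitrary messages to all neighbours, receives their messages (knowing the arrival port), and performs arbitrary local computation. Initially a node knows only its degree and its advice. Advice: an oracle knowing the graph assigns each node a binary string; the size of advice is the maximum string length. All nodes run the same deterministic algorithm. Labeled topology recognition: all nodes output the same port-labeled graph $H$ with distinct node labels and each node its own label, such that some isomorphism $G\to H$ maps every node to the node carrying the label it output. Time is the number of rounds until all nodes have output. *)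

(* Defs.v *)
From Stdlib Require Import Reals.
From mathcomp Require Import all_boot.

Set Implicit Arguments.
Unset Strict Implicit.
Unset Printing Implicit Defensive.

(* A port-labeled graph on nodes 0 .. size G - 1.
   [nth (0,0) (adj G v) i = (w, j)] means: the edge leaving v by port i
   goes to node w and arrives there on port j. *)
Definition pgraph := seq (seq (nat * nat)).

Definition adj (G : pgraph) (v : nat) : seq (nat * nat) := nth [::] G v.

Definition deg (G : pgraph) (v : nat) : nat := size (adj G v).

Definition wf_pgraph (G : pgraph) : Prop :=
  forall v, v < size G ->
    uniq (map fst (adj G v)) /\
    forall i, i < deg G v ->
      let: (w, j) := nth (0, 0) (adj G v) i in
      [/\ w < size G, w <> v, j < deg G w & nth (0, 0) (adj G w) j = (v, i)].

Fixpoint reach (G : pgraph) (k : nat) (u v : nat) : bool :=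
  if k is k'.+1 then (u == v) || has (fun p => reach G k' p.1 v) (adj G u)
  else u == v.

(* G has diameter D (for D >= 1): every pair is at distance <= D, and some
   pair is at distance > D - 1.  This also forces connectivity. *)
Definition has_diameter (G : pgraph) (D : nat) : Prop :=
  (forall u v, u < size G -> v < size G -> reach G D u v) /\
  (exists u v, [/\ u < size G, v < size G & ~~ reach G D.-1 u v]).

Definition pg_iso (G H : pgraph) (f : nat -> nat) : Prop :=
  [/\ size H = size G,
      (forall v, v < size G -> f v < size H),
      (forall u v, u < size G -> v < size G -> f u = f v -> u = v) &
      (forall v, v < size G ->
         adj H (f v) = map (fun p => (f p.1, p.2)) (adj G v))].

(* A deterministic LOCAL algorithm, run identically by all nodes.
   Outputs are a labeled graph H (node labels are the node indices
   0 .. size H - 1 of H, hence distinct) together with the node's label. *)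
Record algo := Algo {
  St : Type;
  Msg : Type;
  init : nat -> seq bool -> St;        (* degree, advice *)
  send : St -> nat -> Msg;             (* message sent on a given port *)
  recv : St -> seq Msg -> St;          (* messages indexed by arrival port *)
  outp : St -> option (pgraph * nat)
}.

Fixpoint state (A : algo) (G : pgraph) (adv : nat -> seq bool) (t : nat)
  : nat -> St A :=
  match t with
  | 0 => fun v => @init A (deg G v) (adv v)
  | t'.+1 =>
      let s := state A G adv t' in
      fun v => @recv A (s v) (map (fun p => @send A (s p.1) p.2) (adj G v))
  end.

Definition outputs_at (A : algo) (G : pgraph) (adv : nat -> seq bool)
    (v t : nat) (o : pgraph * nat) : Prop :=
  @outp A (state A G adv t v) = Some o /\
  forall t', t' < t -> @outp A (state A G adv t' v) = None.

Definition recognizes_within (A : algo) (G : pgraph) (adv : nat -> seq bool)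
    (T : nat) : Prop :=
  exists (H : pgraph) (lab : nat -> nat),
    (forall v, v < size G -> exists t, t <= T /\ outputs_at A G adv v t (H, lab v))
    /\ pg_iso G H lab.

(* Main.v *)
Require Import Defs.
From Stdlib Require Import Reals Lra.
From mathcomp Require Import all_boot zify.
Local Open Scope R_scope.
Local Open Scope nat_scope.

Fixpoint enc (k x : nat) : seq bool :=
  if k is k'.+1 then (x %% 2 == 1) :: enc k' (x %/ 2) else [::].
Fixpoint dec (s : seq bool) : nat :=
  if s is b :: s' then (if b then 1 else 0) + 2 * dec s' else 0.

Lemma size_enc k x : size (enc k x) = k.
Proof. by elim: k x => //= k IH x; rewrite IH. Qed.

Lemma dec_enc k x : x < 2 ^ k -> dec (enc k x) = x.
Proof.
elim: k x => [|k IH] x /=; first by rewrite expn0; lia.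
rewrite expnS => Hx; rewrite IH; last by lia.
case: eqP => H; lia.
Qed.

Fixpoint decs (k m : nat) (s : seq bool) : seq nat :=
  if m is m'.+1 then dec (take k s) :: decs k m' (drop k s) else [::].

Lemma decs_enc k ns : all (fun x => x < 2 ^ k) ns ->
  decs k (size ns) (flatten (map (enc k) ns)) = ns.
Proof.
elim: ns => //= x ns IH /andP [Hx Hns].
rewrite take_size_cat ?size_enc // drop_size_cat ?size_enc //.
by rewrite dec_enc // IH.
Qed.

Lemma size_flatten_enc k ns : size (flatten (map (enc k) ns)) = k * size ns.
Proof. elim: ns => //= [|x ns IH]; first by rewrite muln0.
by rewrite size_cat size_enc IH mulnS. Qed.

Fixpoint pairs (l : seq nat) : seq (nat * nat) :=
  match l with a :: b :: r => (a, b) :: pairs r | _ => [::] end.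
Definition unpairs (ps : seq (nat * nat)) : seq nat :=
  flatten (map (fun p => [:: p.1; p.2]) ps).

Lemma pairs_unpairs ps : pairs (unpairs ps) = ps.
Proof. by elim: ps => //= [[a b] ps] IH; rewrite /unpairs /= in IH *; rewrite IH. Qed.

Lemma size_unpairs ps : size (unpairs ps) = 2 * size ps.
Proof. elim: ps => //= p ps IH; rewrite /unpairs /= in IH *; rewrite IH; lia. Qed.

Definition Know := seq (nat * seq (nat * nat)).

Definition lookup (u : nat) (K : Know) : seq (nat * nat) :=
  (nth (0, [::]) K (find (fun r => r.1 == u) K)).2.

Definition kbits (n : nat) := (trunc_log 2 n).+1.

Definition myalgo (n D : nat) : algo :=
  @Algo (nat * nat * Know)%type Know
    (fun d s => let l := decs (kbits n) (1 + 2 * d) s in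
                (0, head 0 l, [:: (head 0 l, pairs (behead l))]))
    (fun s _ => s.2)
    (fun s ms => (s.1.1.+1, s.1.2, s.2 ++ flatten ms))
    (fun s => if s.1.1 == D then Some (mkseq (fun u => lookup u s.2) n, s.1.2)
              else None).

Definition myadv (n : nat) (G : pgraph) (v : nat) : seq bool :=
  flatten (map (enc (kbits n)) (v :: unpairs (adj G v))).

Arguments myadv : simpl never.
Arguments decs : simpl never.

Lemma deg_le G v : wf_pgraph G -> v < size G -> deg G v <= size G.
Proof.
move=> wf Hv; have [Hu Hi] := wf v Hv.
rewrite /deg -(size_map fst) -(size_iota 0 (size G)).
apply: uniq_leq_size => // x /mapP [p /(nthP (0,0)) [i Hi' <-] ->].
have := Hi i Hi'; case: (nth _ _ i) => w j [Hw _ _ _].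
by rewrite mem_iota /=.
Qed.

Lemma reach_eq G t u v : u = v -> reach G t u v.
Proof. by move=> ->; case: t => /= [|t]; rewrite eqxx. Qed.

Section Inv.
Variables (n D : nat) (G : pgraph).
Hypotheses (wf : wf_pgraph G) (Hn : size G = n).

Definition goodK (K : Know) := forall r, r \in K -> r.1 < n /\ r.2 = adj G r.1.

Lemma state_inv t v : v < n ->
  let s := state (myalgo n D) G (myadv n G) t v in
  [/\ s.1.1 = t, s.1.2 = v, goodK s.2 &
      forall u, reach G t v u -> has (fun r => r.1 == u) s.2].
Proof.
elim: t v => [|t IH] v Hv.
- have Hk : all (fun x => x < 2 ^ kbits n) (v :: unpairs (adj G v)).
    have lt2 : forall x, x < n -> x < 2 ^ kbits n.
      move=> x Hx; apply: leq_trans Hx _; apply: ltnW; exact: trunc_log_ltn.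
    rewrite /= lt2 //=; apply/allP => x.
    have [_ Hi] := wf (v) ltac:(by rewrite Hn).
    rewrite /unpairs => /flatten_mapP [p /(nthP (0,0)) [i Hi' Hp]].
    have := Hi i Hi'; rewrite Hp; case: p {Hp} => w j [Hw _ Hj _].
    rewrite !inE /= => /orP [] /eqP ->; apply: lt2; rewrite -?Hn //.
    apply: leq_trans Hj _; rewrite Hn -[X in _ <= X]Hn; exact: deg_le.
  have E : decs (kbits n) (1 + 2 * deg G v) (myadv n G v) = v :: unpairs (adj G v).
    have := @decs_enc _ _ Hk; rewrite [size _]/= size_unpairs => <-.
    by rewrite /myadv /deg add1n.
  cbn -[decs myadv kbits]; rewrite E /= pairs_unpairs; split => //.
  + by move=> r; rewrite inE => /eqP -> /=.
  + by move=> u ->.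
- have [H1 H2 H3 H4] := IH v Hv.
  rewrite /=; split => //=; first by rewrite H1.
  + move=> r; rewrite mem_cat => /orP [/H3 //|/flatten_mapP [p Hp]].
    have [_ Hi] := wf v ltac:(by rewrite Hn).
    move: Hp => /(nthP (0,0)) [i Hi' Hp].
    have := Hi i Hi'; rewrite Hp; case: p {Hp} => w j [Hw _ _ _] /=.
    have [_ _ H3' _] := IH w ltac:(by rewrite -Hn); exact: H3'.
  + move=> u /orP [/eqP Heq|/hasP [p Hp Hr]].
      by rewrite has_cat H4 // reach_eq.
    rewrite has_cat; apply/orP; right.
    have [_ Hi] := wf v ltac:(by rewrite Hn).
    have Hp0 := Hp.
    move: Hp => /(nthP (0,0)) [i Hi' Hp].
    have := Hi i Hi'; rewrite Hp => {Hp}; case: p Hp0 Hr => w j Hp0 /= Hr [Hw _ _ _].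
    have [_ _ _ H4'] := IH w ltac:(by rewrite -Hn).
    have /hasP [r Hr1 Hr2] := H4' u Hr.
    apply/hasP; exists r => //; apply/flatten_mapP; by exists (w, j).
Qed.
End Inv.

Lemma ln_le' (x y : R) : Rlt 0 x -> Rle x y -> Rle (ln x) (ln y).
Proof.
move=> Hx Hxy; case: (Rle_lt_or_eq_dec _ _ Hxy) => H.
- by apply: Rlt_le; apply: ln_increasing.
- by rewrite H; apply: Rle_refl.
Qed.

Section RealPart.
Local Open Scope R_scope.

Lemma INR_exp2 L : INR (2 ^ L)%nat = pow (INR 2) L.
Proof.
elim: L => [|L IH]; first by rewrite expn0.
by rewrite expnS -multE mult_INR IH /=.
Qed.

Lemma size_bound n k : (2 <= n)%nat -> (2 ^ k.-1 <= n)%nat -> (0 < k)%nat ->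
  Rle (INR (k * (2 * n + 1))%nat) (Rmult (Rmult (INR 6) (INR n)) (Rdiv (ln (INR n)) (ln 2))).
Proof.
move=> Hn Hk Hk0.
have ln2 : 0 < ln 2 by have := ln_lt_2; lra.
have n2 : 2 <= INR n by apply: (le_INR 2); apply/leP.
have H1 : INR k.-1 * ln 2 <= ln (INR n).
  rewrite -ln_pow; last lra.
  apply: ln_le'; first by apply: pow_lt; lra.
  have -> : 2 = INR 2 by [].
  by rewrite -INR_exp2; apply: le_INR; apply/leP.
have H2 : ln 2 <= ln (INR n) by apply: ln_le'; lra.
have Ek : INR k = INR k.-1 + 1 by rewrite -S_INR; case: k Hk0 Hk H1.
have Hkr : INR k * ln 2 <= 2 * ln (INR n) by rewrite Ek; nra.
rewrite -multE -plusE mult_INR plus_INR mult_INR.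
have Hk' : INR k <= 2 * (ln (INR n) / ln 2).
  apply: (Rmult_le_reg_r (ln 2)) => //.
  rewrite Rmult_assoc /Rdiv Rmult_assoc Rinv_l; lra.
have Hkpos : 0 <= INR k by apply: pos_INR.
have -> : INR 2 = 2 by [].
have -> : INR 1 = 1 by [].
have -> : INR 6 = 6 by rewrite INR_IZR_INZ.
nra.
Qed.
End RealPart.

Theorem proposition5p1 :
  exists C : R, Rlt 0 C /\
  forall n D : nat, 2 <= n -> 1 <= D ->
    exists A : algo,
      forall G : pgraph, wf_pgraph G -> size G = n -> has_diameter G D ->
        exists adv : nat -> seq bool,
          (forall v, v < n ->
             Rle (INR (size (adv v)))
                 (Rmult (Rmult C (INR n)) (Rdiv (ln (INR n)) (ln 2)))) /\
          recognizes_within A G adv D.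
Proof.
exists (INR 6); split; first by apply: lt_0_INR; apply/ltP.
move=> n D Hn HD; exists (myalgo n D) => G wf HGn [Hdiam _].
exists (myadv n G); split.
- move=> v Hv.
  apply: Rle_trans (@size_bound n (kbits n) Hn _ _) => //; last first.
    by rewrite /kbits /=; apply: trunc_logP => //; lia.
  apply: le_INR; apply/leP.
  rewrite /myadv size_flatten_enc /= size_unpairs.
  have := deg_le G v wf ltac:(by rewrite HGn); rewrite HGn /deg => Hd.
  apply: leq_mul => //; lia.
- exists G, id; split.
  + move=> v Hv; exists D; split => //.
    have [H1 H2 H3 H4] := @state_inv n D G wf HGn D v ltac:(by rewrite -HGn).
    split.
    * rewrite /= H1 eqxx H2; congr (Some (_, _)).
      apply: (@eq_from_nth _ [::]); first by rewrite size_mkseq.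
      move=> u; rewrite size_mkseq => Hu; rewrite nth_mkseq //.
      have := H4 u (Hdiam v u Hv ltac:(by rewrite HGn)).
      move=> Hh; have Hf := Hh; rewrite has_find in Hf.
      have Hm := mem_nth (0, [::]) Hf.
      have /eqP Hr := nth_find (0, [::]) Hh.
      have [_ E] := H3 _ Hm.
      by rewrite /lookup E Hr.
    * move=> t' Ht'; rewrite /=.
      have [H1' _ _ _] := @state_inv n D G wf HGn t' v ltac:(by rewrite -HGn).
      by rewrite H1'; case: eqP => // E; move: Ht'; rewrite E ltnn.
  + split => //.
    move=> v _; rewrite /=.
    by elim: (adj G v) => //= [[a b] l] <-.
Qed.
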